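(* Let $(\mathcal{O},g,f)$ be an oriented matroid program with $\mathcal{O}$ of rank $r\ge 3$, and let $(C,X,Y)$ be a modular triple of cocircuits such that $z(C\circ X\circ Y)$ is a flat of rank $r-3$ of $\mathcal{M}(\mathcal{O})$, with $C_g=X_g=Y_g=+$. Let $e\in\operatorname{supp}(C)$ with $(X\circ Y)_e=0$. Let $X^1$ be obtained by cocircuit elimination of $g$ between $-X$ and $C$, and $Y^1$ by cocircuit elimination of $g$ between $-Y$ and $C$. Then $X^1\circ Y^1$ is an edge, and $X\to_{g,f}Y \iff Y^1\to_{e,f}X^1 \iff -X^1\to_{e,f}-Y^1.$
   Context: Oriented matroid $\mathcal{O}$ of rank $r$ on finite $E$, given by its cocircuits (sign vectors in $\{+,-,0\}^E$), underlying matroid $\mathcal{M}(\mathcal{O})$. Notation: $\operatorname{supp}(X)$, $z(X)=E\setminus\operatorname{supp}(X)$, $\operatorname{sep}(X,Y)=\{e:X_e=-Y_e\ne0\}$, $(X\circ Y)_e=X_e$ if $X_e\ne0$, else $Y_e$. An edge is a covector whose zero set is a flat of rank $r-2$; cocircuits $X\ne\pm Y$ are comodular if $X\circ Y$ is an edge. A modular triple of cocircuits $(C,X,Y)$ is one in which each of the three pairs is comodular. For comodular $X,Y$ and $e\in\operatorname{sep}(X,Y)$, cocircuit elimination of $e$ between $X$ and $Y$ yields the unique cocircuit $Z$ with $Z_e=0$ and $Z_h=(X\circ Y)_h$ for $h\notin\operatorname{sep}(X,Y)$. An oriented matroid program $(\mathcal{O},g,f)$: $g\neq f\in E$, $g$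 not a loop, $f$ not a coloop. For distinct $a,b\in E$ and comodular $X,Y$ with $X_a=Y_a\ne0$, let $Z$ be obtained by eliminating $a$ between $-X$ and $Y$; write $X\to_{a,b}Y$ if $Z_b=+$, $X\leftarrow_{a,b}Y$ if $Z_b=-$, $X\leftrightarrow_{a,b}Y$ if $Z_b=0$. *)

(* Defs.v *)
From mathcomp Require Import all_boot.
Set Implicit Arguments. Unset Strict Implicit. Unset Printing Implicit Defensive.

Section OM.
Variable E : finType.

(* Signs: None = 0, Some true = +, Some false = - *)
Definition sv := {ffun E -> option bool}.

Definition zerov : sv := [ffun _ => None].
Definition opp (X : sv) : sv := [ffun e => omap negb (X e)].
Definition svcomp (X Y : sv) : sv :=
  [ffun e => if X e is Some b then Some b else Y e].
Definition supp (X : sv) : {set E} := [set e | X e != None].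
Definition zs (X : sv) : {set E} := ~: supp X.
Definition sep (X Y : sv) : {set E} :=
  [set e | (X e != None) && (X e == omap negb (Y e))].

Definition is_OM (Cs : {set sv}) : Prop :=
  [/\ zerov \notin Cs,
      (forall X, X \in Cs -> opp X \in Cs),
      (forall X Y, X \in Cs -> Y \in Cs -> supp X \subset supp Y ->
          X = Y \/ X = opp Y) &
      (forall X Y e, X \in Cs -> Y \in Cs -> X <> opp Y -> e \in sep X Y ->
          exists2 Z, Z \in Cs &
            [/\ Z e = None,
                (forall h, Z h = Some true -> X h = Some true \/ Y h = Some true) &
                (forall h, Z h = Some false -> X h = Some false \/ Y h = Some false)])].

(* Underlying matroid M(O): its cocircuits are the supports of the cocircuits
   of O, i.e. its hyperplanes are the zero sets of cocircuits.
   closure A = intersection of all hyperplanes containing A. *)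
Definition closure (Cs : {set sv}) (A : {set E}) : {set E} :=
  \bigcap_(X in Cs | A \subset zs X) zs X.
Definition indep (Cs : {set sv}) (I : {set E}) : bool :=
  [forall x in I, x \notin closure Cs (I :\ x)].
Definition rank (Cs : {set sv}) (A : {set E}) : nat :=
  \max_(I : {set E} | (I \subset A) && indep Cs I) #|I|.
Definition flat (Cs : {set sv}) (F : {set E}) : bool := closure Cs F == F.
Definition rankOM (Cs : {set sv}) : nat := rank Cs setT.
Definition is_basis (Cs : {set sv}) (B : {set E}) : bool :=
  indep Cs B && [forall I : {set E}, (indep Cs I && (B \subset I)) ==> (I == B)].
Definition loop (Cs : {set sv}) (x : E) : Prop := ~~ indep Cs [set x].
Definition coloop (Cs : {set sv}) (x : E) : Prop :=
  forall B, is_basis Cs B -> x \in B.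

Definition covector (Cs : {set sv}) (V : sv) : Prop :=
  exists s : seq sv, all (fun X => X \in Cs) s /\ V = foldr svcomp zerov s.
Definition edge (Cs : {set sv}) (V : sv) : Prop :=
  covector Cs V /\ flat Cs (zs V) /\ rank Cs (zs V) = rankOM Cs - 2.
Definition comodular (Cs : {set sv}) (X Y : sv) : Prop :=
  [/\ X \in Cs, Y \in Cs, X <> Y, X <> opp Y & edge Cs (svcomp X Y)].

Definition elim_result (Cs : {set sv}) (a : E) (X Y Z : sv) : Prop :=
  [/\ Z \in Cs, Z a = None &
      forall h, h \notin sep X Y -> Z h = svcomp X Y h].

Definition arrow (Cs : {set sv}) (a b : E) (X Y : sv) : Prop :=
  [/\ comodular Cs X Y, X a = Y a, X a <> None &
      exists Z, elim_result Cs a (opp X) Y Z /\ Z b = Some true].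

End OM.

(* Main.v *)
Require Import Defs.
From mathcomp Require Import all_boot.
Set Implicit Arguments. Unset Strict Implicit. Unset Printing Implicit Defensive.

Section Basics.
Variable E : finType.
Implicit Types (X Y A B D Z : sv E) (S T : {set E}).

Lemma inzs X x : (x \in zs X) = (X x == None).
Proof. by rewrite /zs /supp !inE negbK. Qed.
Lemma insupp X x : (x \in supp X) = (X x != None).
Proof. by rewrite /supp inE. Qed.
Lemma zsE X x : (x \in zs X) = (x \notin supp X).
Proof. by rewrite /zs inE. Qed.

Lemma opp_opp X : opp (opp X) = X.
Proof. by apply/ffunP => x; rewrite !ffunE; case: (X x) => // -[]. Qed.
Lemma opp_app X x : opp X x = omap negb (X x).
Proof. by rewrite ffunE. Qed.
Lemma comp_app X Y x : svcomp X Y x = if X x is Some b then Some b else Y x.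
Proof. by rewrite ffunE. Qed.
Lemma supp_opp X : supp (opp X) = supp X.
Proof. by apply/setP => x; rewrite !insupp opp_app; case: (X x). Qed.
Lemma zs_opp X : zs (opp X) = zs X.
Proof. by rewrite /zs supp_opp. Qed.
Lemma zs_comp X Y : zs (svcomp X Y) = zs X :&: zs Y.
Proof. by apply/setP => x; rewrite in_setI !inzs comp_app; case: (X x). Qed.

Lemma insep X Y x : (x \in sep X Y) = (X x != None) && (X x == omap negb (Y x)).
Proof. by rewrite /sep inE. Qed.

Variable Cs : {set sv E}.

Lemma closure_sub S : S \subset Defs.closure Cs S.
Proof. by apply/subsetP => x xS; apply/bigcapP => D /andP [_ /subsetP]; apply. Qed.

Lemma closure_zs S D : D \in Cs -> S \subset zs D -> Defs.closure Cs S \subset zs D.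
Proof. by move=> DC SD; apply: (bigcap_min D) => //; rewrite DC. Qed.

Lemma closure_mono S T : S \subset T -> Defs.closure Cs S \subset Defs.closure Cs T.
Proof.
move=> ST; apply/subsetP => x /bigcapP H; apply/bigcapP => D /andP [DC TD].
by apply: H; rewrite DC (subset_trans ST TD).
Qed.

Lemma notin_closure S y : y \notin Defs.closure Cs S ->
  exists2 D, D \in Cs & (S \subset zs D) && (y \notin zs D).
Proof.
move=> H; case: (pickP [pred D | (D \in Cs) && (S \subset zs D) && (y \notin zs D)]).
  by move=> D /= /andP [/andP [DC SD] yD]; exists D => //; rewrite SD.
move=> H0; case/negP: H; apply/bigcapP => D /andP [DC SD].
by move: (H0 D) => /=; rewrite DC SD /=; move/negbFE.
Qed.

Lemma in_closure S y : (forall D, D \in Cs -> S \subset zs D -> y \in zs D) ->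
  y \in Defs.closure Cs S.
Proof. by move=> H; apply/bigcapP => D /andP [DC SD]; apply: H. Qed.

Lemma flat_zs D : D \in Cs -> flat Cs (zs D).
Proof.
move=> DC; rewrite /flat eqEsubset closure_sub andbT.
by apply: closure_zs.
Qed.

Lemma flatI S D : flat Cs S -> D \in Cs -> flat Cs (S :&: zs D).
Proof.
move=> /eqP FS DC; rewrite /flat eqEsubset closure_sub andbT subsetI.
rewrite closure_zs ?subsetIr // andbT.
by rewrite -{2}FS closure_mono // subsetIl.
Qed.

End Basics.

Section OMtheory.
Variable E : finType.
Variable Cs : {set sv E}.
Hypothesis HOM : is_OM Cs.
Implicit Types (X Y A B D Z : sv E) (S T : {set E}).

Lemma om_opp X : X \in Cs -> opp X \in Cs.
Proof. by case: HOM => _ H _ _; apply: H. Qed.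

Lemma om_inc X Y : X \in Cs -> Y \in Cs -> supp X \subset supp Y -> X = Y \/ X = opp Y.
Proof. by case: HOM => _ _ H _; apply: H. Qed.

Lemma om_inc_supp X Y : X \in Cs -> Y \in Cs -> supp X \subset supp Y -> supp X = supp Y.
Proof. by move=> XC YC /(om_inc XC YC) [->|->]; rewrite ?supp_opp. Qed.

Lemma om_nz X : X \in Cs -> exists x, x \in supp X.
Proof.
case: HOM => H0 _ _ _ XC; case: (pickP (mem (supp X))) => [x xX|H]; first by exists x.
case/negP: H0; suff -> : zerov E = X by [].
apply/ffunP => x; rewrite ffunE; move: (H x); rewrite /= insupp.
by case: (X x).
Qed.

Definition conf Z A B :=
  (forall h, Z h = Some true -> A h = Some true \/ B h = Some true) /\
  (forall h, Z h = Some false -> A h = Some false \/ B h = Some false).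

Lemma om_elim X Y e : X \in Cs -> Y \in Cs -> X <> opp Y -> e \in sep X Y ->
  exists2 Z, Z \in Cs & [/\ Z e = None & conf Z X Y].
Proof.
case: HOM => _ _ _ H XC YC nXY eS; have [Z ZC [Ze H1 H2]] := H X Y e XC YC nXY eS.
by exists Z.
Qed.

Lemma conf_supp Z A B : conf Z A B -> supp Z \subset supp A :|: supp B.
Proof.
case=> H1 H2; apply/subsetP => h; rewrite in_setU !insupp.
case E1: (Z h) => [[]|] // _.
  by case: (H1 _ E1) => ->; rewrite ?orbT.
by case: (H2 _ E1) => ->; rewrite ?orbT.
Qed.

Lemma weak_elim C1 C2 x : C1 \in Cs -> C2 \in Cs -> supp C1 != supp C2 ->
  x \in supp C1 -> x \in supp C2 ->
  exists2 C3, C3 \in Cs & supp C3 \subset (supp C1 :|: supp C2) :\ x.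
Proof.
move=> C1C C2C ne; rewrite !insupp.
case E1: (C1 x) => [b1|] // _; case E2: (C2 x) => [b2|] // _.
have fin : forall Z A, Z \in Cs -> Z x = None -> conf Z A C2 -> supp A = supp C1 ->
    exists2 C3, C3 \in Cs & supp C3 \subset (supp C1 :|: supp C2) :\ x.
  move=> Z A ZC Zx cf sA; exists Z => //; apply/subsetP => h hZ.
  rewrite in_setD1 -sA (subsetP (conf_supp cf)) // andbT.
  by apply/eqP => hx; move: hZ; rewrite hx insupp Zx.
case: (boolP (b1 == ~~ b2)) => hb.
- have nO : C1 <> opp C2 by move=> h; move: ne; rewrite h supp_opp eqxx.
  have eS : x \in sep C1 C2 by rewrite insep E1 E2 /= (eqP hb).
  have [Z ZC [Zx cf]] := om_elim C1C C2C nO eS.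
  exact: (fin Z C1).
- have nO : opp C1 <> opp C2.
    by move=> h; move: ne; rewrite -(opp_opp C1) h opp_opp eqxx.
  have eS : x \in sep (opp C1) C2.
    by rewrite insep opp_app E1 E2 /=; move: hb; clear E1 E2; case: b1; case: b2.
  have [Z ZC [Zx cf]] := om_elim (om_opp C1C) C2C nO eS.
  by apply: (fin Z (opp C1)) => //; rewrite supp_opp.
Qed.

Lemma strong_elim_n n : forall C1 C2 x y, #|supp C1 :|: supp C2| <= n ->
  C1 \in Cs -> C2 \in Cs -> x \in supp C1 -> x \in supp C2 ->
  y \in supp C1 -> y \notin supp C2 ->
  exists2 C3, C3 \in Cs & (y \in supp C3) && (supp C3 \subset (supp C1 :|: supp C2) :\ x).
Proof.
elim: n => [|n IH] C1 C2 x y.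
  move=> Hn _ _ _ _ yC1 _; have : y \in supp C1 :|: supp C2 by rewrite in_setU yC1.
  by move: Hn; rewrite leqn0 => /eqP/cards0_eq ->; rewrite inE.
move=> Hn C1C C2C xC1 xC2 yC1 yC2.
have ne : supp C1 != supp C2 by apply/eqP => h; move: yC2; rewrite -h yC1.
have [C3 C3C sC3] := weak_elim C1C C2C ne xC1 xC2.
case: (boolP (y \in supp C3)) => yC3; first by exists C3 => //; rewrite yC3.
have nsub : ~~ (supp C3 \subset supp C1).
  apply/negP => s31; have := om_inc_supp C3C C1C s31 => h.
  by move: (subsetP sC3 x); rewrite h xC1 !(in_setD1, in_setU) eqxx /=; move/(_ isT).
have [z zC3 zC1] : exists2 z, z \in supp C3 & z \notin supp C1.
  by case/subsetPn: nsub => z; exists z.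
have zC2 : z \in supp C2.
  by move: (subsetP sC3 z zC3); rewrite !(in_setD1, in_setU) (negbTE zC1) /= => /andP [].
have xC3 : x \notin supp C3 by apply/negP => /(subsetP sC3); rewrite !(in_setD1, in_setU) eqxx.
have sz23 : #|supp C2 :|: supp C3| <= n.
  rewrite -ltnS; apply: leq_trans Hn; apply: proper_card.
  rewrite properE; apply/andP; split.
    rewrite subUset subsetUr /=; apply: subset_trans sC3 _; apply: subD1set.
  apply/subsetPn; exists y; first by rewrite in_setU yC1.
  by rewrite in_setU (negbTE yC2) (negbTE yC3).
have [C4 C4C /andP [xC4 sC4]] := IH C2 C3 z x sz23 C2C C3C zC2 zC3 xC2 xC3.
have yC4 : y \notin supp C4.
  by apply/negP => /(subsetP sC4); rewrite !(in_setD1, in_setU) (negbTE yC2) (negbTE yC3) andbF.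
have zC4 : z \notin supp C4 by apply/negP => /(subsetP sC4); rewrite !(in_setD1, in_setU) eqxx.
have sz14 : #|supp C1 :|: supp C4| <= n.
  rewrite -ltnS; apply: leq_trans Hn; apply: proper_card.
  rewrite properE; apply/andP; split.
    rewrite subUset subsetUl /=; apply: (subset_trans sC4).
    apply: (subset_trans (subD1set _ _)); rewrite subUset subsetUr /=.
    apply: (subset_trans sC3); apply: (subset_trans (subD1set _ _)); exact: subxx.
  apply/subsetPn; exists z; first by rewrite in_setU zC2 orbT.
  by rewrite in_setU (negbTE zC1) (negbTE zC4).
have [C5 C5C /andP [yC5 sC5]] := IH C1 C4 x y sz14 C1C C4C xC1 xC4 yC1 yC4.
exists C5 => //; rewrite yC5 /=; apply: (subset_trans sC5).
apply: setSD; rewrite subUset subsetUl /=; apply: (subset_trans sC4).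
apply: (subset_trans (subD1set _ _)); rewrite subUset subsetUr /=.
apply: (subset_trans sC3); apply: (subset_trans (subD1set _ _)); exact: subxx.
Qed.

End OMtheory.

Section Rank.
Variable E : finType.
Variable Cs : {set sv E}.
Hypothesis HOM : is_OM Cs.
Implicit Types (X Y A B D Z : sv E) (S T J : {set E}).

Lemma strong_elim C1 C2 x y : C1 \in Cs -> C2 \in Cs -> x \in supp C1 -> x \in supp C2 ->
  y \in supp C1 -> y \notin supp C2 ->
  exists2 C3, C3 \in Cs & (y \in supp C3) && (supp C3 \subset (supp C1 :|: supp C2) :\ x).
Proof. exact: (strong_elim_n HOM (leqnn _)). Qed.

Lemma exchange J x y : y \in Defs.closure Cs (x |: J) -> y \notin Defs.closure Cs J ->
  x \in Defs.closure Cs (y |: J).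
Proof.
move=> yin ynot; apply: contraT => xnot.
have [D1 D1C /andP [s1 x1]] := notin_closure xnot.
have [D2 D2C /andP [s2 y2]] := notin_closure ynot.
suff [D DC /andP [sD yD]] : exists2 D, D \in Cs & (x |: J \subset zs D) && (y \notin zs D).
  by move/bigcapP: yin => /(_ D); rewrite DC sD => /(_ isT); rewrite (negbTE yD).
case: (boolP (x \in zs D2)) => x2.
  by exists D2 => //; rewrite y2 subUset sub1set x2 s2.
have [D3 D3C /andP [yD3 sD3]] : exists2 C3, C3 \in Cs &
    (y \in supp C3) && (supp C3 \subset (supp D2 :|: supp D1) :\ x).
  apply: strong_elim => //.
  - by move: x2; rewrite zsE negbK.
  - by move: x1; rewrite zsE negbK.
  - by move: y2; rewrite zsE negbK.
  - by have := subsetP s1 y (setU11 _ _); rewrite zsE.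
exists D3 => //; rewrite zsE negbK yD3 andbT subUset sub1set zsE.
apply/andP; split.
  by apply/negP => /(subsetP sD3); rewrite in_setD1 eqxx.
apply/subsetP => j jJ; rewrite zsE; apply/negP => /(subsetP sD3).
rewrite in_setD1 in_setU.
have := subsetP s2 j jJ; have := subsetP s1 j; rewrite in_setU1 jJ orbT => /(_ isT).
by rewrite !zsE => /negbTE -> /negbTE ->; rewrite andbF.
Qed.

Lemma rank_lt S T x : flat Cs S -> flat Cs T -> S \subset T -> x \in T -> x \notin S ->
  rank Cs S < rank Cs T.
Proof.
move=> /eqP fS fT ST xT xS.
pose P := [pred I : {set E} | (I \subset S) && indep Cs I].
have P0 : 0 < #|P|.
  apply/card_gt0P; exists set0; rewrite inE sub0set /indep.
  by apply/forall_inP => y; rewrite inE.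
have [I0 /andP [I0S I0i] eqI] := eq_bigmax_cond (fun I : {set E} => #|I|) P0.
have -> : rank Cs S = #|I0| by rewrite /rank -eqI.
have xI0 : x \notin I0 by apply/negP => /(subsetP I0S); rewrite (negbTE xS).
have cx : #|x |: I0| = #|I0|.+1 by rewrite cardsU1 xI0.
suff : #|x |: I0| <= rank Cs T by rewrite cx.
rewrite /rank; apply: (@leq_bigmax_cond _ (fun I : {set E} => (I \subset T) && indep Cs I) (fun I : {set E} => #|I|) (x |: I0)).
rewrite subUset sub1set xT (subset_trans I0S ST) /=.
apply/forall_inP => y; rewrite in_setU1 => /orP [/eqP -> | yI].
  rewrite setU1K //; apply/negP => /(subsetP (closure_mono Cs I0S)).
  by rewrite fS (negbTE xS).
have yx : y != x by apply/eqP => h; move: yI; rewrite h (negbTE xI0).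
have -> : (x |: I0) :\ y = x |: (I0 :\ y).
  by apply/setP => z; rewrite !(in_setD1, in_setU1); case: (z =P y) => // ->; rewrite (negbTE yx).
apply/negP => yc.
have ync : y \notin Defs.closure Cs (I0 :\ y) by move/forall_inP: I0i; apply.
have := exchange yc ync; rewrite setD1K // => xc.
by move: (subsetP (closure_mono Cs I0S) x xc); rewrite fS (negbTE xS).
Qed.

End Rank.

From mathcomp Require Import zify.

Section Main.
Variable E : finType.
Variable Cs : {set sv E}.
Hypothesis HOM : is_OM Cs.
Implicit Types (X Y A B D Z W : sv E) (S T J L : {set E}).

Lemma zsI (X : sv E) k : X k = None -> k \in zs X.
Proof. by rewrite inzs => ->. Qed.

Lemma flatT : flat Cs setT.
Proof. by rewrite /flat eqEsubset subsetT closure_sub. Qed.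

Lemma rank_hyp D : D \in Cs -> rank Cs (zs D) < rankOM Cs.
Proof.
move=> DC; have [x xD] := om_nz HOM DC.
apply: (rank_lt HOM (flat_zs DC) flatT (subsetT _) (in_setT x)).
by rewrite zsE negbK.
Qed.

Lemma zs_sub_supp D D' : (zs D \subset zs D') = (supp D' \subset supp D).
Proof. by rewrite /zs setCS. Qed.

Lemma hyp2 L D D' k : flat Cs L -> rank Cs L = rankOM Cs - 2 ->
  D \in Cs -> D' \in Cs -> L \subset zs D -> L \subset zs D' ->
  k \in zs D -> k \in zs D' -> k \notin L -> D = D' \/ D = opp D'.
Proof.
move=> fL rL DC D'C LD LD' kD kD' kL.
have fM : flat Cs (zs D :&: zs D') by apply: flatI => //; apply: flat_zs.
have r1 : rank Cs L < rank Cs (zs D :&: zs D').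
  apply: (rank_lt HOM fL fM _ _ kL); first by rewrite subsetI LD LD'.
  by rewrite inE kD kD'.
case: (boolP (zs D \subset zs D')) => sub.
  rewrite zs_sub_supp in sub.
  by case: (om_inc HOM D'C DC sub) => ->; [left|right; rewrite opp_opp].
case/subsetPn: sub => x xD xD'.
have r2 : rank Cs (zs D :&: zs D') < rank Cs (zs D).
  apply: (rank_lt HOM fM (flat_zs DC) (subsetIl _ _) xD).
  by rewrite inE (negbTE xD') andbF.
have r3 := rank_hyp DC.
exfalso; lia.
Qed.

Lemma conf_some Z A B k u : conf Z A B -> Z k = Some u -> A k = Some u \/ B k = Some u.
Proof. by case=> H1 H2; case: u => Zk; [apply: H1 | apply: H2]. Qed.

Lemma conf_zero Z A B k : conf Z A B -> A k = None -> B k = None -> Z k = None.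
Proof.
move=> cf Ak Bk; case Zk: (Z k) => [u|] //.
by case: (conf_some cf Zk); rewrite ?Ak ?Bk.
Qed.

Lemma comod_edge A B : comodular Cs A B ->
  flat Cs (zs A :&: zs B) /\ rank Cs (zs A :&: zs B) = rankOM Cs - 2.
Proof. by case=> _ _ _ _ [_ [f r]]; rewrite -zs_comp. Qed.

Lemma not_sub_zs A B : A \in Cs -> B \in Cs -> A <> B -> A <> opp B ->
  exists2 k, k \in zs A & k \notin zs B.
Proof.
move=> AC BC nAB nAoB; case: (boolP (zs A \subset zs B)) => sub.
  rewrite zs_sub_supp in sub; case: (om_inc HOM BC AC sub) => h.
    by case: nAB.
  by case: nAoB; rewrite h opp_opp.
by case/subsetPn: sub => k; exists k.
Qed.

Lemma FE A B a : comodular Cs A B -> a \in sep A B -> exists Z, elim_result Cs a A B Z.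
Proof.
move=> cAB aS; have [fL rL] := comod_edge cAB.
case: (cAB) => AC BC nAB nAoB _.
have [Z ZC [Za cf]] := om_elim HOM AC BC nAoB aS.
exists Z; split => // h hS.
set L := zs A :&: zs B in fL rL.
have zero : forall W A' B', conf W A' B' -> (forall k, k \in L -> A' k = None) ->
    (forall k, k \in L -> B' k = None) -> L \subset zs W.
  move=> W A' B' cW HA HB; apply/subsetP => k kL; rewrite inzs.
  by rewrite (conf_zero cW (HA k kL) (HB k kL)).
have LA : forall k, k \in L -> A k = None by move=> k; rewrite inE !inzs => /andP [/eqP].
have LB : forall k, k \in L -> B k = None by move=> k; rewrite inE !inzs => /andP [_ /eqP].
have LZ : L \subset zs Z by apply: (zero _ _ _ cf).
move: aS; rewrite insep => /andP [Aa /eqP AB].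
have Ba : B a != None by move: Aa; rewrite AB; case: (B a).
have nZA : forall D, D \in Cs -> L \subset zs D -> D <> A -> D <> opp A ->
    forall k, k \in zs A -> k \notin L -> D k <> None.
  move=> D DC LD n1 n2 k kA kL Dk.
  have LA' : L \subset zs A by apply: subsetIl.
  by case: (hyp2 fL rL DC AC LD LA' (zsI Dk) kA kL).
have nZB : forall D, D \in Cs -> L \subset zs D -> D <> B -> D <> opp B ->
    forall k, k \in zs B -> k \notin L -> D k <> None.
  move=> D DC LD n1 n2 k kB kL Dk.
  have LB' : L \subset zs B by apply: subsetIr.
  by case: (hyp2 fL rL DC BC LD LB' (zsI Dk) kB kL).
have ZA1 : Z <> A by move=> hh; move: Aa; rewrite -hh Za.
have ZA2 : Z <> opp A by move=> hh; move: Aa; rewrite -(opp_opp A) -hh opp_app Za.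
have ZB1 : Z <> B by move=> hh; move: Ba; rewrite -hh Za.
have ZB2 : Z <> opp B by move=> hh; move: Ba; rewrite -(opp_opp B) -hh opp_app Za.
rewrite comp_app; move: hS; rewrite insep.
case Ah: (A h) => [t|]; case Bh: (B h) => [t'|] /=.
- move=> ht; have tt : t' = t.
    by move: ht; clear Ah Bh; case: t; case: t'.
  subst t'.
  case Zh: (Z h) => [u|].
    by case: (conf_some cf Zh); rewrite ?Ah ?Bh => hh; inversion hh.
  exfalso.
  have hS2 : h \in sep (opp A) B by rewrite insep opp_app Ah Bh /=.
  have nOO : opp A <> opp B by move=> hh; apply: nAB; rewrite -(opp_opp A) hh opp_opp.
  have [W WC [Wh cW]] := om_elim HOM (om_opp HOM AC) BC nOO hS2.
  have LW : L \subset zs W.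
    apply: (zero _ _ _ cW) => // k kL; by rewrite opp_app LA.
  have hL : h \notin L by rewrite inE !inzs Ah.
  have [WZ|WZ] := hyp2 fL rL WC ZC LW LZ (zsI Wh) (zsI Zh) hL.
  + have [k2 k2B k2A] := not_sub_zs BC AC (fun hh => nAB (esym hh))
        (fun hh => nAoB ltac:(by rewrite hh opp_opp)).
    have k2L : k2 \notin L by rewrite inE (negbTE k2A).
    have := nZB Z ZC LZ ZB1 ZB2 k2 k2B k2L.
    move: k2B k2A; rewrite !inzs => /eqP Bk2; case Ak2: (A k2) => [s2|] // _.
    case Zk2: (Z k2) => [u|] // _.
    have Zu : u = s2 by case: (conf_some cf Zk2); rewrite ?Ak2 ?Bk2 => hh; inversion hh.
    subst u.
    have Wk2 : W k2 = Some s2 by rewrite WZ.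
    case: (conf_some cW Wk2); first by rewrite opp_app Ak2; case: s2 {Ak2 Zk2 Wk2}.
    by rewrite Bk2.
  + have [k1 k1A k1B] := not_sub_zs AC BC nAB nAoB.
    have k1L : k1 \notin L by rewrite inE (negbTE k1B) andbF.
    have := nZA Z ZC LZ ZA1 ZA2 k1 k1A k1L.
    move: k1A k1B; rewrite !inzs => /eqP Ak1; case Bk1: (B k1) => [s1|] // _.
    case Zk1: (Z k1) => [u|] // _.
    have Zu : u = s1 by case: (conf_some cf Zk1); rewrite ?Ak1 ?Bk1 => hh; inversion hh.
    subst u.
    have Wk1 : W k1 = Some (~~ s1) by rewrite WZ opp_app Zk1.
    case: (conf_some cW Wk1); first by rewrite opp_app Ak1.
    by rewrite Bk1; case: s1 {Bk1 Zk1 Wk1}.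
- move=> _; have hL : h \notin L by rewrite inE !inzs Ah.
  have := nZB Z ZC LZ ZB1 ZB2 h (zsI Bh) hL.
  case Zh: (Z h) => [u|] // _.
  by case: (conf_some cf Zh); rewrite ?Ah ?Bh => hh; inversion hh.
- move=> _; have hL : h \notin L by rewrite inE !inzs Ah Bh.
  have := nZA Z ZC LZ ZA1 ZA2 h (zsI Ah) hL.
  case Zh: (Z h) => [u|] // _.
  by case: (conf_some cf Zh); rewrite ?Ah ?Bh => hh; inversion hh.
- move=> _; apply/eqP; rewrite -inzs; apply: (subsetP LZ).
  by rewrite inE !inzs Ah Bh.
Qed.

End Main.

Section Aux.
Variable E : finType.
Variable Cs : {set sv E}.
Implicit Types (X Y A B D Z W : sv E).

Lemma elimA0 a A B Z h : elim_result Cs a A B Z -> A h = None -> Z h = B h.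
Proof.
case=> _ _ H Ah; rewrite H ?comp_app ?Ah //.
by rewrite insep Ah.
Qed.

Lemma elimB0 a A B Z h : elim_result Cs a A B Z -> B h = None -> Z h = A h.
Proof.
case=> _ _ H Bh; rewrite H ?comp_app ?Bh.
  by case: (A h).
by rewrite insep Bh /=; case: (A h).
Qed.

Lemma sep_sym A B h : (h \in sep A B) = (h \in sep B A).
Proof. by rewrite !insep; case: (A h) => [[]|]; case: (B h) => [[]|]. Qed.

Lemma elim_sym a A B Z : elim_result Cs a A B Z -> elim_result Cs a B A Z.
Proof.
case=> ZC Za H; split => // h; rewrite -sep_sym => hS; rewrite H //.
move: hS; rewrite insep !comp_app.
by case: (A h) => [[]|]; case: (B h) => [[]|].
Qed.

Lemma ar1 a b c r : a < b -> b < c -> c < r -> a = r - 3 -> 3 <= r -> b = r - 2.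
Proof. lia. Qed.
Lemma ar2 a b c r : a < b -> b < c -> c = r - 2 -> a = r - 3 -> 3 <= r -> False.
Proof. lia. Qed.

Lemma comp_zero Y : svcomp Y (zerov E) = Y.
Proof. by apply/ffunP => x; rewrite comp_app ffunE; case: (Y x). Qed.

Lemma edge_gen A B : A \in Cs -> B \in Cs -> flat Cs (zs A :&: zs B) ->
  rank Cs (zs A :&: zs B) = rankOM Cs - 2 -> edge Cs (svcomp A B).
Proof.
move=> AC BC f r; split; last by rewrite zs_comp.
by exists [:: A; B]; rewrite /= AC BC comp_zero.
Qed.

End Aux.

Unset Implicit Arguments.
Set Strict Implicit.

Theorem lemma4p3 (E : finType) (Cs : {set sv E}) (g f e : E)
    (C X Y X1 Y1 : sv E) :
  is_OM Cs -> g <> f -> ~ loop Cs g -> ~ coloop Cs f ->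
  3 <= rankOM Cs ->
  comodular Cs C X -> comodular Cs C Y -> comodular Cs X Y ->
  flat Cs (zs (svcomp C (svcomp X Y))) ->
  rank Cs (zs (svcomp C (svcomp X Y))) = rankOM Cs - 3 ->
  C g = Some true -> X g = Some true -> Y g = Some true ->
  e \in supp C -> svcomp X Y e = None ->
  elim_result Cs g (opp X) C X1 ->
  elim_result Cs g (opp Y) C Y1 ->
  edge Cs (svcomp X1 Y1) /\
  (arrow Cs g f X Y <-> arrow Cs e f Y1 X1) /\
  (arrow Cs e f Y1 X1 <-> arrow Cs e f (opp X1) (opp Y1)).
Proof.
move=> HOM _ _ _ r3 cCX cCY cXY fF rF Cg Xg Yg eC eXY eX1 eY1.
have [fCX rCX] := comod_edge cCX.
have [fCY rCY] := comod_edge cCY.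
have [fXY rXY] := comod_edge cXY.
case: (cCX) => CC XC nCX nCoX _; case: (cCY) => _ YC nCY nCoY _.
case: (cXY) => _ _ nXY nXoY _.
rewrite !zs_comp in fF rF.
set F := zs C :&: (zs X :&: zs Y) in fF rF.
have [Xe Ye] : X e = None /\ Y e = None.
  by move: eXY; rewrite comp_app; case: (X e).
have Ce : C e != None by rewrite -insupp.
have [X1C X1g _] := eX1; have [Y1C Y1g _] := eY1.
have X1z : forall h, C h = None -> X h = None -> X1 h = None.
  by move=> h Ch Xh; rewrite (elimA0 eX1) ?opp_app ?Xh.
have Y1z : forall h, C h = None -> Y h = None -> Y1 h = None.
  by move=> h Ch Yh; rewrite (elimA0 eY1) ?opp_app ?Yh.
have X1e : X1 e = C e by rewrite (elimA0 eX1) // opp_app Xe.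
have Y1e : Y1 e = C e by rewrite (elimA0 eY1) // opp_app Ye.
have FL : forall S : {set E}, F \subset S -> rank Cs S = rankOM Cs - 2 ->
    exists2 k, k \in S & k \notin F.
  move=> S FS rS; case: (boolP (S \subset F)) => SF.
    have : S = F by apply/eqP; rewrite eqEsubset SF FS.
    by move=> SF'; move: rS r3; rewrite SF' rF => a b; clear -a b; lia.
  by case/subsetPn: SF => k; exists k.
have [kY kYin kYF] : exists2 k, k \in zs C :&: zs Y & k \notin F.
  apply: FL rCY; rewrite subsetI subsetIl /=.
  by apply: (subset_trans (subsetIr _ _)); apply: subsetIr.
have [kX kXin kXF] : exists2 k, k \in zs C :&: zs X & k \notin F.
  apply: FL rCX; rewrite subsetI subsetIl /=.
  by apply: (subset_trans (subsetIr _ _)); apply: subsetIl.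
have zX1Y1 : zs X1 != zs Y1.
  apply/eqP => hz.
  have LX1 : zs C :&: zs X \subset zs X1.
    apply/subsetP => h; rewrite in_setI !inzs => /andP [/eqP Ch /eqP Xh].
    by rewrite X1z.
  move: kYin; rewrite in_setI => /andP [kYC kYY].
  have kX1 : kY \in zs X1.
    by rewrite hz inzs Y1z //; [move: kYC | move: kYY]; rewrite inzs => /eqP.
  have kYL : kY \notin zs C :&: zs X.
    by move: kYF; rewrite /F !in_setI kYC kYY /= andbT.
  case: (hyp2 HOM fCX rCX X1C CC LX1 (subsetIl _ _) kX1 kYC kYL) => hh.
    by move: X1g; rewrite hh Cg.
  by move: X1g; rewrite hh opp_app Cg.
have nX1Y1 : X1 <> Y1 by move=> hh; move: zX1Y1; rewrite hh eqxx.
have nX1oY1 : X1 <> opp Y1 by move=> hh; move: zX1Y1; rewrite hh zs_opp eqxx.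
set M := zs X1 :&: zs Y1.
have fM : flat Cs M by apply: flatI => //; apply: flat_zs.
have FM : F \subset M.
  apply/subsetP => h; rewrite !in_setI !inzs => /and3P [/eqP Ch /eqP Xh /eqP Yh].
  by rewrite X1z // Y1z.
have gF : g \notin F by rewrite !in_setI !inzs Cg.
have rM : rank Cs M = rankOM Cs - 2.
  have r1 : rank Cs F < rank Cs M.
    by apply: (rank_lt HOM fF fM FM _ gF); rewrite in_setI !inzs X1g Y1g.
  have [x xX1 xY1] := not_sub_zs HOM X1C Y1C nX1Y1 nX1oY1.
  have r2 : rank Cs M < rank Cs (zs X1).
    apply: (rank_lt HOM fM (flat_zs X1C) (subsetIl _ _) xX1).
    by rewrite in_setI (negbTE xY1) andbF.
  have r4 := rank_hyp HOM X1C.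
  exact: (ar1 r1 r2 r4 rF r3).
have edgeM : edge Cs (svcomp X1 Y1) by apply: edge_gen; [exact: X1C|exact: Y1C|exact: fM|exact: rM].
have comY1X1 : comodular Cs Y1 X1.
  split.
  - exact: Y1C.
  - exact: X1C.
  - by move=> hh; apply: nX1Y1.
  - by move=> hh; apply: nX1oY1; rewrite hh opp_opp.
  - apply: edge_gen; [exact: Y1C | exact: X1C | |]; rewrite setIC; [exact: fM | exact: rM].
have comoY1X1 : comodular Cs (opp Y1) X1.
  split.
  - exact: om_opp.
  - exact: X1C.
  - by move=> hh; apply: nX1oY1; rewrite -hh.
  - by move=> hh; apply: nX1Y1; rewrite -(opp_opp X1) -hh opp_opp.
  - apply: edge_gen; [exact: om_opp | exact: X1C | |]; rewrite zs_opp setIC.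
      exact: fM.
    exact: rM.
have comoXoY1 : comodular Cs (opp X1) (opp Y1).
  split.
  - exact: om_opp.
  - exact: om_opp.
  - by move=> hh; apply: nX1Y1; rewrite -(opp_opp X1) hh opp_opp.
  - by rewrite opp_opp => hh; apply: nX1oY1; rewrite -hh opp_opp.
  - apply: edge_gen; [exact: om_opp | exact: om_opp | |]; rewrite !zs_opp.
      exact: fM.
    exact: rM.
have comoXY : comodular Cs (opp X) Y.
  split.
  - exact: om_opp.
  - exact: YC.
  - by move=> hh; move: Yg; rewrite -hh opp_app Xg.
  - by move=> hh; apply: nXY; rewrite -(opp_opp X) hh opp_opp.
  - apply: edge_gen; [exact: om_opp | exact: YC | |]; rewrite !zs_opp.
      exact: fXY.
    exact: rXY.
have eS : e \in sep (opp Y1) X1.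
  by rewrite insep !opp_app Y1e X1e; move: Ce; case: (C e) => [[]|].
have gS : g \in sep (opp X) Y by rewrite insep opp_app Xg Yg.
have EQ : forall W Z, elim_result Cs g (opp X) Y W ->
    elim_result Cs e (opp Y1) X1 Z -> W = Z.
  move=> W Z eW eZ.
  have [WC Wg _] := eW; have [ZC Ze _] := eZ.
  have LW : zs X :&: zs Y \subset zs W.
    apply/subsetP => h; rewrite in_setI !inzs => /andP [/eqP Xh /eqP Yh].
    by rewrite (elimA0 eW) ?opp_app ?Xh ?Yh.
  have FZ : F \subset zs Z.
    apply/subsetP => h; rewrite !in_setI !inzs => /and3P [/eqP Ch /eqP Xh /eqP Yh].
    have Y1h : opp Y1 h = None by rewrite opp_app Y1z.
    by rewrite (elimA0 eZ Y1h) X1z.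
  have LZ : zs X :&: zs Y \subset zs Z.
    apply: contraT => /subsetPn [x xL xZ].
    set G := (zs X :&: zs Y) :&: zs Z.
    have fG : flat Cs G by apply: flatI.
    have r1 : rank Cs F < rank Cs G.
      apply: (rank_lt HOM fF fG (x := e)).
      - by rewrite subsetI FZ andbT; apply: subsetIr.
      - by rewrite !in_setI !inzs Xe Ye Ze.
      - by rewrite !in_setI !inzs negb_and Ce.
    have r2 : rank Cs G < rank Cs (zs X :&: zs Y).
      apply: (rank_lt HOM fG fXY (subsetIl _ _) xL).
      by rewrite in_setI (negbTE xZ) andbF.
    by case: (ar2 r1 r2 rXY rF r3).
  have gZ : g \in zs Z by rewrite inzs (elimA0 eZ) ?opp_app ?Y1g ?X1g.
  have gL : g \notin zs X :&: zs Y by rewrite !in_setI !inzs Xg.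
  case: (hyp2 HOM fXY rXY WC ZC LW LZ (zsI Wg) gZ gL) => // WZ.
  move: kXin kXF; rewrite !in_setI !inzs => /andP [/eqP Ck /eqP Xk].
  rewrite Ck Xk /=; case Yk: (Y kX) => [t|] // _.
  have Wk : W kX = Some t by rewrite (elimA0 eW) ?opp_app ?Xk.
  have X1k : X1 kX = None by rewrite X1z.
  have Y1k : Y1 kX = Some (~~ t) by rewrite (elimB0 eY1) ?opp_app ?Yk.
  have Zk : Z kX = Some t by rewrite (elimB0 eZ X1k) opp_app Y1k /= negbK.
  by move: Wk; rewrite WZ opp_app Zk; case: t {Yk Y1k Zk}.
split; first exact: edgeM.
split.
  split.
    case=> _ _ _ [W [eW Wf]].
    have [Z eZ] := FE HOM comoY1X1 eS.
    split; [exact: comY1X1 | by rewrite Y1e X1e | by rewrite Y1e; apply/eqP | ].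
    by exists Z; split; [exact: eZ | rewrite -(EQ W Z eW eZ)].
  case=> _ _ _ [Z [eZ Zf]].
  have [W eW] := FE HOM comoXY gS.
  split; [exact: cXY | by rewrite Xg Yg | by rewrite Xg | ].
  by exists W; split; [exact: eW | rewrite (EQ W Z eW eZ)].
split.
  case=> _ _ _ [Z [eZ Zf]].
  split; [exact: comoXoY1 | by rewrite !opp_app X1e Y1e
         | by rewrite opp_app X1e; move: Ce; case: (C e) | ].
  by exists Z; split; [rewrite opp_opp; apply: elim_sym | exact: Zf].
case=> _ _ _ [Z [eZ Zf]].
split; [exact: comY1X1 | by rewrite Y1e X1e | by rewrite Y1e; apply/eqP | ].
exists Z; split; [move: eZ; rewrite opp_opp; apply: elim_sym | exact: Zf].
Qed.
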